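(* Let $Z_+=\{z\in\mathbb{Z}: z>0\}$ and $Z_-=\mathbb{Z}\setminus Z_+$. Let $K$ be an infinite compact (Hausdorff) group. Let $D=K^{Z_-}$ carry the discrete topology and $C=K^{Z_+}$ carry the Tychonoff product topology, both with coordinatewise group operations. Then the topological group $G=D\times C$ (identified with $K^{\mathbb{Z}}$ as a group, with the product topology of $D$ and $C$) is not $g$-reversible; specifically, the right shift $f((x_n)_{n\in\mathbb{Z}})=(x_{n-1})_{n\in\mathbb{Z}}$ is a continuous automorphism of $G$ which is not open.
   Context: All topological groups are assumed Hausdorff. A topological group $G$ is called $g$-reversible if every continuous automorphism of $G$ (i.e. every continuous group isomorphism of $G$ onto itself) is an open map. *)

(* Defs.v *)
From Stdlib Require Import ZArith List.
Open Scope Z_scope.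

Definition is_topology {T : Type} (tau : (T -> Prop) -> Prop) : Prop :=
  tau (fun _ => True) /\
  (forall (I : Type) (U : I -> T -> Prop),
      (forall i, tau (U i)) -> tau (fun x => exists i, U i x)) /\
  (forall U V, tau U -> tau V -> tau (fun x => U x /\ V x)).

Definition generated_topology {T : Type} (S : (T -> Prop) -> Prop)
  : (T -> Prop) -> Prop :=
  fun U => forall tau : (T -> Prop) -> Prop,
      is_topology tau -> (forall V, S V -> tau V) -> tau U.

Definition discrete_topology (T : Type) : (T -> Prop) -> Prop := fun _ => True.

Definition prod_topology {A B : Type}
  (tA : (A -> Prop) -> Prop) (tB : (B -> Prop) -> Prop)
  : (A * B -> Prop) -> Prop :=
  generated_topology (fun W => exists U V, tA U /\ tB V /\
                         forall p, W p <-> (U (fst p) /\ V (snd p))).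

Definition pi_topology {I : Type} {X : I -> Type}
  (tau : forall i, (X i -> Prop) -> Prop) : ((forall i, X i) -> Prop) -> Prop :=
  generated_topology (fun W => exists i U, tau i U /\
                         forall f, W f <-> U (f i)).

Definition initial_topology {A B : Type} (f : A -> B)
  (tB : (B -> Prop) -> Prop) : (A -> Prop) -> Prop :=
  fun U => exists V, tB V /\ forall a, U a <-> V (f a).

Definition continuous {A B : Type} (tA : (A -> Prop) -> Prop)
  (tB : (B -> Prop) -> Prop) (f : A -> B) : Prop :=
  forall V, tB V -> tA (fun a => V (f a)).

Definition open_map {A B : Type} (tA : (A -> Prop) -> Prop)
  (tB : (B -> Prop) -> Prop) (f : A -> B) : Prop :=
  forall U, tA U -> tB (fun b => exists a, U a /\ f a = b).

Definition hausdorff {T : Type} (tau : (T -> Prop) -> Prop) : Prop :=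
  forall x y : T, x <> y ->
    exists U V, tau U /\ tau V /\ U x /\ V y /\ (forall z, ~ (U z /\ V z)).

Definition compact {T : Type} (tau : (T -> Prop) -> Prop) : Prop :=
  forall (I : Type) (U : I -> T -> Prop),
    (forall i, tau (U i)) -> (forall x, exists i, U i x) ->
    exists l : list I, forall x, exists i, In i l /\ U i x.

Definition infinite_type (T : Type) : Prop :=
  ~ exists l : list T, forall x, In x l.

Definition is_group {G : Type} (mul : G -> G -> G) (inv : G -> G) (e : G) : Prop :=
  (forall x y z, mul x (mul y z) = mul (mul x y) z) /\
  (forall x, mul e x = x /\ mul x e = x) /\
  (forall x, mul (inv x) x = e /\ mul x (inv x) = e).

Definition topological_group {G : Type} (tau : (G -> Prop) -> Prop)
  (mul : G -> G -> G) (inv : G -> G) (e : G) : Prop :=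
  is_topology tau /\ hausdorff tau /\ is_group mul inv e /\
  continuous (prod_topology tau tau) tau (fun p => mul (fst p) (snd p)) /\
  continuous tau tau inv.

Definition bijective {A B : Type} (f : A -> B) : Prop :=
  (forall x y, f x = f y -> x = y) /\ (forall y, exists x, f x = y).

Definition continuous_automorphism {G : Type} (tau : (G -> Prop) -> Prop)
  (mul : G -> G -> G) (f : G -> G) : Prop :=
  (forall x y, f (mul x y) = mul (f x) (f y)) /\ bijective f /\
  continuous tau tau f.

Definition g_reversible {G : Type} (tau : (G -> Prop) -> Prop)
  (mul : G -> G -> G) : Prop :=
  forall f : G -> G, continuous_automorphism tau mul f -> open_map tau tau f.

Definition Zminus : Type := { z : Z | z <= 0 }.
Definition Zplus : Type := { z : Z | 0 < z }.

Definition splitZ {K : Type} (x : Z -> K) : (Zminus -> K) * (Zplus -> K) :=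
  (fun z => x (proj1_sig z), fun z => x (proj1_sig z)).

(** Topology of G = D x C transported to K^Z: D discrete, C Tychonoff. *)
Definition G_topology {K : Type} (tauK : (K -> Prop) -> Prop)
  : ((Z -> K) -> Prop) -> Prop :=
  initial_topology (@splitZ K)
    (prod_topology (discrete_topology (Zminus -> K))
                   (@pi_topology Zplus (fun _ => K) (fun _ => tauK))).

Definition G_mul {K : Type} (mul : K -> K -> K) (x y : Z -> K) : Z -> K :=
  fun n => mul (x n) (y n).

Definition right_shift {K : Type} (x : Z -> K) : Z -> K := fun n => x (n - 1).

(* Main.v *)
Require Import Defs.
From Stdlib Require Import ZArith List Lia Classical FunctionalExtensionality PropExtensionality.
Open Scope Z_scope.

Lemma set_ext {T} (A B : T -> Prop) : (forall x, A x <-> B x) -> A = B.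
Proof. intros H; apply functional_extensionality; intros x; apply propositional_extensionality; apply H. Qed.

Lemma open_ext {T} (tau : (T->Prop)->Prop) A B : tau A -> (forall x, A x <-> B x) -> tau B.
Proof. intros HA H; rewrite <- (set_ext A B H); exact HA. Qed.

Lemma gen_top {T} (S : (T->Prop)->Prop) : is_topology (generated_topology S).
Proof.
  unfold generated_topology; repeat split.
  - intros tau [H1 _] _. exact H1.
  - intros I U HU tau Ht HS. destruct Ht as [H1 [H2 H3]]. apply H2. intro i. apply HU; [split; auto|auto].
  - intros U V HU HV tau Ht HS. destruct Ht as [H1 [H2 H3]]. apply H3; [apply HU|apply HV]; auto; split; auto.
Qed.

Lemma gen_sub {T} (S : (T->Prop)->Prop) V : S V -> generated_topology S V.
Proof. intros HV tau Ht HS; auto. Qed.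

Lemma top_const {T} (tau : (T->Prop)->Prop) (P : Prop) : is_topology tau -> tau (fun _ => P).
Proof.
  intros [H1 [H2 H3]]. destruct (classic P) as [p|np].
  - apply (open_ext _ _ _ H1). intros; tauto.
  - apply (open_ext _ (fun x => exists i : False, (fun (_ : False) (_ : T) => True) i x)).
    + apply H2. intros [].
    + intros x; split; [intros [[] _] | intros p; contradiction].
Qed.

Lemma top_inter {T} (tau : (T->Prop)->Prop) U V : is_topology tau -> tau U -> tau V -> tau (fun x => U x /\ V x).
Proof. intros [_ [_ H]]; auto. Qed.

Lemma gen_cont {A B} (tA : (A->Prop)->Prop) (S : (B->Prop)->Prop) (g : A -> B) :
  is_topology tA -> (forall V, S V -> tA (fun a => V (g a))) -> continuous tA (generated_topology S) g.
Proof.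
  intros [H1 [H2 H3]] HS V HV. apply (HV (fun W => tA (fun a => W (g a)))).
  - split; [exact H1|split].
    + intros I U HU. exact (H2 I (fun i a => U i (g a)) HU).
    + intros U W HU HW. exact (H3 _ _ HU HW).
  - exact HS.
Qed.

Lemma cont_comp {A B C} tA tB tC (f : A -> B) (g : B -> C) :
  continuous tA tB f -> continuous tB tC g -> continuous tA tC (fun a => g (f a)).
Proof. intros Hf Hg V HV. exact (Hf _ (Hg _ HV)). Qed.

Definition piC {K : Type} (tauK : (K -> Prop) -> Prop) :=
  @pi_topology Defs.Zplus (fun _ => K) (fun _ => tauK).
Definition tP {K : Type} (tauK : (K -> Prop) -> Prop) :=
  prod_topology (discrete_topology (Defs.Zminus -> K)) (piC tauK).

Lemma box_open K (tauK : (K -> Prop) -> Prop) (U : (Defs.Zminus->K) -> Prop) V :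
  piC tauK V -> tP tauK (fun p => U (fst p) /\ V (snd p)).
Proof. intros HV. apply gen_sub. exists U, V. split; [exact I|split; [exact HV| intros; tauto]]. Qed.

Lemma cyl_open K (tauK : (K -> Prop) -> Prop) i U : tauK U -> piC tauK (fun f => U (f i)).
Proof. intros; apply gen_sub; exists i, U; split; auto; intros; tauto. Qed.

Lemma piC_top K (tauK : (K -> Prop) -> Prop) : is_topology (piC tauK).
Proof. apply gen_top. Qed.
Lemma tP_top K (tauK : (K -> Prop) -> Prop) : is_topology (tP tauK).
Proof. apply gen_top. Qed.

Definition join {K : Type} (p : ((Defs.Zminus -> K) * (Defs.Zplus -> K))%type) (n : Z) : K :=
  match Z_lt_le_dec 0 n with
  | left H => snd p (exist (fun z => 0 < z) n H)
  | right H => fst p (exist (fun z => z <= 0) n H)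
  end.

Lemma join_split K (a : Z -> K) : join (splitZ a) = a.
Proof. apply functional_extensionality; intro n; unfold join; destruct (Z_lt_le_dec 0 n); reflexivity. Qed.

Definition hh {K : Type} (p : ((Defs.Zminus -> K) * (Defs.Zplus -> K))%type) := splitZ (right_shift (join p)).

Lemma h_cont K (tauK : (K -> Prop) -> Prop) (e : K) : continuous (tP tauK) (tP tauK) hh.
Proof.
  apply gen_cont; [apply gen_top|].
  intros W [U [V [_ [HV HW]]]].
  apply (open_ext _ (fun p => U (fst (hh p)) /\ V (snd (hh p)))); [|intros; rewrite HW; tauto].
  apply (top_inter _ (fun p => U (fst (hh p))) (fun p => V (snd (hh p)))); [apply gen_top| |].
  - set (c := (fun _ : Defs.Zplus => e)).
    apply (open_ext _ (fun p => (fun d => U (fst (hh (d, c)))) (fst p) /\ (fun _ => True) (snd p))).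
    + apply (box_open K tauK (fun d => U (fst (hh (d, c)))) (fun _ => True)). apply top_const, piC_top.
    + intros [d c']; cbn beta.
      assert (E: fst (hh (d,c')) = fst (hh (d,c))).
      { unfold hh, splitZ, right_shift, join; simpl. apply functional_extensionality; intros [z Hz]; simpl.
        destruct (Z_lt_le_dec 0 (z-1)); [lia|reflexivity]. }
      rewrite E; tauto.
  - assert (Hc : continuous (tP tauK) (piC tauK) (fun p => snd (hh p))).
    { apply gen_cont; [apply gen_top|]. intros W' [i [U' [HU' HW']]].
      apply (open_ext _ (fun p => U' (snd (hh p) i))); [|intros; rewrite HW'; tauto].
      destruct i as [i Hi]. unfold hh, splitZ, right_shift, join. cbn [fst snd proj1_sig].
      destruct (Z_lt_le_dec 0 (i-1)) as [H|H].
      - apply (open_ext _ (fun p => (fun _ => True) (fst p) /\ (fun c => U' (c (exist _ (i-1) H))) (snd p))).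
        + apply (box_open K tauK (fun _ => True) (fun c => U' (c (exist _ (i-1) H)))), cyl_open; auto.
        + intros p; cbn beta. tauto.
      - apply (open_ext _ (fun p => (fun d => U' (d (exist _ (i-1) H))) (fst p) /\ (fun _ => True) (snd p))).
        + apply (box_open K tauK (fun d => U' (d (exist _ (i-1) H))) (fun _ => True)), top_const, piC_top.
        + intros; simpl; tauto. }
    exact (Hc V HV).
Qed.

Lemma shift_cont K (tauK : (K -> Prop) -> Prop) (e : K) :
  continuous (G_topology tauK) (G_topology tauK) right_shift.
Proof.
  intros U [V [HV HU]]. exists (fun p => V (hh p)). split; [exact (h_cont _ _ e V HV)|].
  intros a. rewrite HU. unfold hh. rewrite join_split. tauto.
Qed.

Lemma single_open K tauK (mul : K -> K -> K) inv e :
  topological_group tauK mul inv e -> tauK (fun k => k = e) -> forall x, tauK (fun k => k = x).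
Proof.
  intros [Ht [_ [[Hassoc [Hid Hinv]] [Hmul _]]]] He x.
  assert (HL: continuous tauK (prod_topology tauK tauK) (fun k => (inv x, k))).
  { apply gen_cont; auto. intros W [U [V [HU [HV HW]]]].
    apply (open_ext _ (fun k => (fun _ => U (inv x)) k /\ V k)).
    - apply top_inter; auto. apply top_const; auto.
    - intros k; rewrite HW; simpl; tauto. }
  pose proof (cont_comp _ _ _ _ _ HL Hmul _ He) as H. simpl in H.
  apply (open_ext _ _ _ H). intros k; split.
  - intros Hk.
    rewrite <- (proj1 (Hid k)). rewrite <- (proj2 (Hinv x)). rewrite <- Hassoc, Hk. apply (proj2 (Hid x)).
  - intros ->. apply (proj1 (Hinv x)).
Qed.

Lemma e_not_open K tauK (mul : K -> K -> K) inv e :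
  topological_group tauK mul inv e -> compact tauK -> infinite_type K -> ~ tauK (fun k => k = e).
Proof.
  intros HG Hc Hinf He. apply Hinf. destruct (Hc K (fun x y => y = x)) as [l Hl].
  - intro x. exact (single_open _ _ _ _ _ HG He x).
  - intros x; exists x; reflexivity.
  - exists l. intros x. destruct (Hl x) as [i [Hi ->]]. exact Hi.
Qed.

Definition bk {K : Type} (e k : K) : Z -> K := fun n => if Z.eq_dec n 1 then k else e.

Lemma not_open K tauK (mul : K -> K -> K) inv e :
  topological_group tauK mul inv e -> compact tauK -> infinite_type K ->
  ~ open_map (G_topology tauK) (G_topology tauK) right_shift.
Proof.
  intros HG Hc Hinf Hopen.
  pose proof HG as [Ht _].
  set (z0 := exist (fun z => z <= 0) 0 (Z.le_refl 0) : Defs.Zminus).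
  assert (HU : G_topology tauK (fun a => a 0 = e)).
  { exists (fun p => fst p z0 = e /\ True). split.
    - apply (box_open K tauK (fun d => d z0 = e) (fun _ => True)). apply top_const, piC_top.
    - intros a; simpl. tauto. }
  destruct (Hopen _ HU) as [V [HV HVi]].
  set (J := fun k => splitZ (bk e k)).
  assert (HJ : continuous tauK (tP tauK) J).
  { apply gen_cont; [exact Ht|]. intros W [U [V2 [_ [HV2 HW]]]].
    apply (open_ext _ (fun k => U (fst (J k)) /\ V2 (snd (J k)))) ; [|intros; rewrite HW; tauto].
    apply (top_inter _ (fun k => U (fst (J k))) (fun k => V2 (snd (J k)))); auto.
    - apply (open_ext _ (fun _ => U (fst (J e)))); [apply top_const; auto|].
      intros k. assert (fst (J k) = fst (J e)) as E.
      { apply functional_extensionality; intros [z Hz]; simpl. unfold bk.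
        destruct (Z.eq_dec z 1); [lia|reflexivity]. }
      rewrite E; tauto.
    - assert (Hj: continuous tauK (piC tauK) (fun k => snd (J k))).
      { apply gen_cont; auto. intros W' [[i Hi] [U' [HU' HW']]].
        apply (open_ext _ (fun k => U' (snd (J k) (exist _ i Hi)))); [|intros; rewrite HW'; tauto].
        simpl. unfold bk. destruct (Z.eq_dec i 1).
        + exact HU'.
        + apply top_const; auto. }
      exact (Hj V2 HV2). }
  apply (e_not_open _ _ _ _ _ HG Hc Hinf).
  apply (open_ext _ _ _ (HJ V HV)). intros k. unfold J. rewrite <- HVi. split.
  - intros [a [Ha Hs]].
    assert (H1 : bk e k 1 = k) by (unfold bk; destruct (Z.eq_dec 1 1); congruence).
    rewrite <- H1, <- Hs. unfold right_shift. simpl. exact Ha.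
  - intros ->. exists (fun _ => e). split; [reflexivity|].
    apply functional_extensionality; intro n; unfold right_shift, bk; destruct (Z.eq_dec n 1); reflexivity.
Qed.

Lemma shift_autom K tauK (mul : K -> K -> K) (e : K) :
  continuous_automorphism (G_topology tauK) (G_mul mul) right_shift.
Proof.
  split; [intros x y; reflexivity|]. split; [split|].
  - intros x y H. apply functional_extensionality; intro n.
    pose proof (f_equal (fun f => f (n+1)) H) as Hn. unfold right_shift in Hn. simpl in Hn.
    replace (n+1-1) with n in Hn by lia. exact Hn.
  - intros y; exists (fun n => y (n+1)). apply functional_extensionality; intro n; unfold right_shift.
    f_equal; lia.
  - exact (shift_cont K tauK e).
Qed.

Theorem mainTheorem6 (K : Type) (tauK : (K -> Prop) -> Prop)
  (mul : K -> K -> K) (inv : K -> K) (e : K) :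
  topological_group tauK mul inv e ->
  compact tauK ->
  infinite_type K ->
  ~ g_reversible (G_topology tauK) (G_mul mul) /\
  continuous_automorphism (G_topology tauK) (G_mul mul) right_shift /\
  ~ open_map (G_topology tauK) (G_topology tauK) right_shift.
Proof.
  intros HG Hc Hinf.
  pose proof (shift_autom K tauK mul e) as H2.
  pose proof (not_open K tauK mul inv e HG Hc Hinf) as H3.
  split; [|split; auto].
  intros Hrev. apply H3. apply Hrev. exact H2.
Qed.
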